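(* Let $X$ be a regular Hausdorff space. If $X$ contains a closed subspace homeomorphic to the Arens space $S_2$, then $\mathcal{K}(X)$ contains a closed subspace homeomorphic to the sequential fan $S_\omega$.
   Context: $\mathcal{K}(X)$ is the set of nonempty compact subsets of $X$ with the Vietoris topology (base: $\langle U_1,\dots,U_k\rangle=\{K: K\subset\bigcup_i U_i,\ K\cap U_j\neq\emptyset\ \forall j\}$, $U_i$ open in $X$). The sequential fan $S_\omega$ is obtained from the topological sum of countably many convergent sequences $T_n\cup\{x_n\}$ ($T_n$ converging to $x_n$), $n\in\omega$, by identifying all $x_n$ to one point. The Arens space $S_2$ is $\{\infty\}\cup\{x_n:n\in\mathbb{N}\}\cup\{x_{n,m}\}$ with each $x_{n,m}$ isolated, basic neighborhoods of $x_n$ being $\{x_n\}\cup\{x_{n,m}: m>k\}$, and basic neighborhoods of $\infty$ being $\{\infty\}\cup\bigcup_{n>k}V_n$ with $V_n$ a neighborhood of $x_n$. *)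

(* Defs.v *)
From HB Require Import structures.
From mathcomp Require Import all_boot all_order all_algebra.
From mathcomp Require Import all_classical all_reals all_analysis.
Set Implicit Arguments.
Unset Strict Implicit.
Unset Printing Implicit Defensive.
Local Open Scope classical_set_scope.

(* A "space" is given by a carrier A : set Y together with a family openY of
   open sets (all contained in A).  [closed_embedding openS openY A f] says
   that f : S -> Y maps into A, is injective, continuous, open onto its image
   (with the subspace topology), and that its image is closed in A. *)
Definition closed_embedding (S Y : Type) (openS : set (set S))
    (openY : set (set Y)) (A : set Y) (f : S -> Y) : Prop :=
  [/\ injective f,
      range f `<=` A,
      (forall V, openY V -> openS (f @^-1` V)),
      (forall U, openS U -> exists V, openY V /\ f @` U = V `&` range f) &
      (exists V, openY V /\ A `\` range f = V `&` A)].

(* AInf = infinity, AX n = x_n, AXX n m = x_{n,m}  (indices n, m in nat) *)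
Inductive arens := AInf | AX of nat | AXX of nat & nat.

(* U is open iff it contains a basic neighbourhood of each of its points:
   x_{n,m} isolated; basic nbhds of x_n : {x_n} u {x_{n,m} : m > k};
   basic nbhds of infinity : {inf} u \bigcup_{n > k} V_n, V_n a nbhd of x_n. *)
Definition arens_open (U : set arens) : Prop :=
  (forall n, U (AX n) -> exists k, forall m, (k < m)%N -> U (AXX n m)) /\
  (U AInf -> exists k, forall n, (k < n)%N ->
      U (AX n) /\ exists j, forall m, (j < m)%N -> U (AXX n m)).

(* FTop = the identified limit point, FT n m = m-th term of the n-th sequence *)
Inductive fan := FTop | FT of nat & nat.

(* quotient topology: FT n m isolated; a neighbourhood of FTop must contain
   a tail of each sequence T_n. *)
Definition fan_open (U : set fan) : Prop :=
  U FTop -> forall n, exists k, forall m, (k < m)%N -> U (FT n m).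

Section Hyperspace.
Variable X : topologicalType.

Definition Kset (K : set X) : Prop := K !=set0 /\ compact K.

Definition vietoris_box (k : nat) (U : nat -> set X) : set (set X) :=
  [set K | Kset K /\
     (forall x, K x -> exists2 i, (i < k)%N & U i x) /\
     (forall i, (i < k)%N -> K `&` U i !=set0)].

Definition vietoris_open (W : set (set X)) : Prop :=
  forall K, W K -> Kset K /\
    exists (k : nat) (U : nat -> set X),
      [/\ (forall i, (i < k)%N -> open (U i)), vietoris_box k U K &
          vietoris_box k U `<=` W].
End Hyperspace.

(* Main.v *)
Require Import Defs.
From HB Require Import structures.
From mathcomp Require Import all_boot all_order all_algebra.
From mathcomp Require Import all_classical all_reals all_analysis.
Local Open Scope classical_set_scope.

Section Proof.
Variables (X : topologicalType) (f : arens -> X).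
Hypothesis finj : injective f.
Hypothesis fcont : forall V : set X, open V -> arens_open (f @^-1` V).
Hypothesis fopen : forall U, arens_open U ->
  exists V : set X, open V /\ f @` U = V `&` range f.
Hypothesis fclosed : exists V : set X, open V /\ setT `\` range f = V `&` setT.

Definition isL (c : arens) : Prop :=
  match c with AXX _ _ => False | _ => True end.
Definition L : set X := f @` [set c | isL c].
Definition g (y : fan) : set X :=
  match y with FTop => L | FT n m => L `|` [set f (AXX n m)] end.

Lemma gP y c : g y (f c) <-> isL c \/ (exists n m, y = FT n m /\ c = AXX n m).
Proof.
split.
- case: y => [|n m] /=.
    by case=> c' Lc' /finj <-; left.
  case=> [[c' Lc' /finj <-]|/finj ->]; first by left.
  by right; exists n, m.
- case=> [Lc|[n [m [-> ->]]]].
    by case: y => [|n m] /=; [|left]; exists c.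
  by right.
Qed.

Lemma L_compact : compact L.
Proof.
move=> F PF FL.
have [cl|ncl] := pselect (cluster F (f AInf)).
  by exists (f AInf); split => //; exists AInf.
have [A [B [FA NB AB]]] : exists A B, [/\ F A, nbhs (f AInf) B & ~ (A `&` B !=set0)].
  apply: contrapT => H; apply: ncl => A B FA NB; apply: contrapT => nAB; apply: H.
  by exists A, B.
move: NB; rewrite nbhsE => -[W0 [oW0 W0fI] W0B].
have [_ /(_ W0fI) [k Hk]] := @fcont W0 oW0.
set S := (fun n => f (AX n)) @` `I_(k.+1).
have FS : F S.
  apply: filterS (filterI FA FL) => x [Ax [c Lc cx]]; subst x.
  move: Lc Ax; case: c => [|n|//] _ Ax.
    by exfalso; apply: AB; exists (f AInf); split; [exact: Ax|exact: W0B].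
  case: (leqP n k) => nk; first by exists n => //=; rewrite /= ltnS.
  by exfalso; apply: AB; exists (f (AX n)); split; [exact: Ax|apply: W0B; case: (Hk n nk)].
have finS : finite_set S by apply: finite_image; apply: finite_II.
have [x [[n _ <-] clx]] := finite_compact finS PF FS.
by exists (f (AX n)); split => //; exists (AX n).
Qed.

Lemma g_Kset y : Kset (g y).
Proof.
split.
  by exists (f AInf); apply/gP; left.
case: y => [|n m] /=; first exact: L_compact.
apply: compactU; [exact: L_compact|exact: compact_set1].
Qed.


Lemma gAXX y n m : g y (f (AXX n m)) -> y = FT n m.
Proof. by case/gP => [//|[n' [m' [-> [-> ->]]]]]. Qed.

Lemma g_range y x : g y x -> exists c, x = f c.
Proof.
case: y => [|n m] /=; first by case=> c _ <-; exists c.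
by case=> [[c _ <-]|->]; [exists c|exists (AXX n m)].
Qed.

Lemma g_inj : injective g.
Proof.
move=> y1 y2 E; case: y1 E => [|n m] E.
  case: y2 E => [|n' m'] E //.
  have : g FTop (f (AXX n' m')) by rewrite E /=; right.
  by move/gAXX.
have : g y2 (f (AXX n m)) by rewrite -E /=; right.
by move/gAXX.
Qed.

Lemma Q1_open n m : arens_open [set c | c = AXX n m].
Proof. by split=> [n' H|H]; discriminate H. Qed.

Lemma hitQ1 n m (O : set X) : f @` [set c | c = AXX n m] = O `&` range f ->
  forall y x, g y x -> O x -> y = FT n m.
Proof.
move=> E y x gx Ox; have [c xc] := g_range _ _ gx; subst x.
have : (O `&` range f) (f c) by split => //; exists c.
rewrite -E => -[c' -> fe].
by apply: gAXX; rewrite fe.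
Qed.

Definition U3 (a b c : set X) : nat -> set X :=
  fun i => if i == 0%N then a else if i == 1%N then b else c.

Lemma U3_open a b c : open a -> open b -> open c ->
  forall i, (i < 3)%N -> open (U3 a b c i).
Proof. by move=> ? ? ? [|[|[|i]]]. Qed.


Lemma g_cont W : vietoris_open W -> fan_open (g @^-1` W).
Proof.
move=> WO WgT n.
have [_ [k [U [oU [_ [cov meet]] sub]]]] := WO _ WgT.
have [i ik Ui] := cov (f (AX n)) (ex_intro2 _ _ (AX n) I erefl).
have [j Hj] := (fcont _ (oU i ik)).1 n Ui.
exists j => m jm; apply: sub; split; first exact: g_Kset.
split.
- move=> x [Lx|->]; first exact: cov.
  by exists i => //; exact: Hj.
- move=> i' i'k; have [x [Kx Ux]] := meet i' i'k.
  by exists x; split => //; left.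
Qed.


Lemma g_open_box y U : fan_open U -> U y ->
  exists k (Ob : nat -> set X), [/\ forall i, (i < k)%N -> open (Ob i),
     vietoris_box k Ob (g y) & forall y', vietoris_box k Ob (g y') -> U y'].
Proof.
move=> UO Uy; case: y Uy => [|n m] Uy.
- have [kf Hkf] := choice (UO Uy).
  pose Q := [set c | match c with AXX n m => (kf n < m)%N | _ => True end].
  have QO : arens_open Q.
    split; first by move=> n _; exists (kf n).
    by move=> _; exists 0%N => n _; split => //; exists (kf n).
  have [Ob [oOb EOb]] := fopen _ QO.
  have LOb : forall c, isL c -> Ob (f c).
    move=> c Lc; have : (f @` Q) (f c) by exists c => //; case: c Lc.
    by rewrite EOb => -[].
  exists 1%N, (fun _ => Ob); split => //.
  + split; first exact: g_Kset.
    split; first by move=> x [c Lc <-]; exists 0%N => //; exact: LOb.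
    by move=> i _; exists (f AInf); split; [exists AInf|exact: LOb].
  + case=> [//|n' m' [_ [cov _]]].
    have [i _ Oi] := cov (f (AXX n' m')) (or_intror erefl).
    have : (Ob `&` range f) (f (AXX n' m')) by split => //; exists (AXX n' m').
    rewrite -EOb => -[c Qc /finj fe]; subst c.
    exact: Hkf.
- have [Ob [oOb EOb]] := fopen _ (Q1_open n m).
  exists 3%N, (U3 Ob setT setT); split.
  + by apply: U3_open => //; exact: openT.
  + split; first exact: g_Kset.
    split; first by move=> x _; exists 2%N.
    case=> [|[|[|i]]] // _.
    * exists (f (AXX n m)); split; first by right.
      have : (f @` [set c | c = AXX n m]) (f (AXX n m)) by exists (AXX n m).
      by rewrite EOb => -[].
    * by exists (f AInf); split => //; left; exists AInf.
    * by exists (f AInf); split => //; left; exists AInf.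
  + move=> y' [_ [_ meet]].
    have [x [gx Ox]] := meet 0%N erefl.
    by rewrite (hitQ1 _ _ _ EOb _ _ gx Ox).
Qed.


Lemma Q1_mem n m (Ob : set X) : f @` [set c | c = AXX n m] = Ob `&` range f ->
  Ob (f (AXX n m)).
Proof.
move=> E; have : (f @` [set c | c = AXX n m]) (f (AXX n m)) by exists (AXX n m).
by rewrite E => -[].
Qed.

Lemma g_closed_box K : Kset K -> ~ range g K ->
  exists k (Ob : nat -> set X), [/\ forall i, (i < k)%N -> open (Ob i),
     vietoris_box k Ob K & forall y, ~ vietoris_box k Ob (g y)].
Proof.
move=> KK nK; have [p0 Kp0] := KK.1.
have [sub|nsub] := pselect (K `<=` range f); last first.
  have [p [Kp nfp]] : exists p, K p /\ ~ range f p.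
    by apply: contrapT => H; apply: nsub => p Kp; apply: contrapT => np; apply: H; exists p.
  have [V0 [oV0 EV0]] := fclosed.
  have V0p : V0 p by have : ([set: X] `\` range f) p by []; rewrite EV0 => -[].
  exists 3%N, (U3 V0 setT setT); split.
  + by apply: U3_open => //; exact: openT.
  + split => //; split; first by move=> x _; exists 2%N.
    by case=> [|[|[|i]]] // _; exists p.
  + move=> y [_ [_ meet]]; have [x [gx Vx]] := meet 0%N erefl.
    have [c xc] := g_range _ _ gx; subst x.
    have : (V0 `&` [set: X]) (f c) by [].
    by rewrite -EV0 => -[_]; apply; exists c.
have [LK|nLK] := pselect (L `<=` K); last first.
  have [p [Lp nKp]] : exists p, L p /\ ~ K p.
    by apply: contrapT => H; apply: nLK => p Lp; apply: contrapT => np; apply: H; exists p.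
  case: Lp => c Lc fcp; subst p.
  have Lnot : forall n m, AXX n m <> c by move=> n m E; subst c.
  have Xnot : forall n, (match c with AX k => k | _ => 0 end < n)%N -> AX n <> c.
    by move=> n kn E; subst c; rewrite ltnn in kn.
  pose Q := [set d | d <> c].
  have QO : arens_open Q.
    split; first by move=> n _; exists 0%N => m _; exact: Lnot.
    move=> _; exists (match c with AX k => k | _ => 0 end) => n kn; split.
      exact: Xnot.
    by exists 0%N => m _; exact: Lnot.
  have [Ob [oOb EOb]] := fopen _ QO.
  have inOb : forall x, K x -> Ob x.
    move=> x Kx; have [d _ xd] := sub x Kx; subst x.
    have : (f @` Q) (f d) by exists d => // dc; subst d.
    by rewrite EOb => -[].
  exists 3%N, (U3 Ob Ob Ob); split.
  + by apply: U3_open.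
  + split => //; split.
      by move=> x Kx; exists 0%N => //=; exact: inOb.
    by case=> [|[|[|i]]] // _; exists p0; split => //; exact: inOb.
  + move=> y [_ [cov _]].
    have [i _ Oi] := cov (f c) (proj2 (gP y c) (or_introl Lc)).
    have Oc : Ob (f c) by move: Oi; rewrite /U3; case: ifP => // _; case: ifP.
    have : (Ob `&` range f) (f c) by split => //; exists c.
    by rewrite -EOb => -[d Qd /finj].
have [p [Kp nLp]] : exists p, K p /\ ~ L p.
  apply: contrapT => H; apply: nK; exists FTop => //; apply/seteqP; split => //.
  by move=> p Kp; apply: contrapT => np; apply: H; exists p.
have [c _ pc] := sub p Kp; subst p.
case: c Kp nLp => [|k|n m] Kp nLp; [by exfalso; apply: nLp; exists AInf|by exfalso; apply: nLp; exists (AX k)|].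
have [q [Kq nq]] : exists q, K q /\ ~ g (FT n m) q.
  apply: contrapT => H; apply: nK; exists (FT n m) => //; apply/seteqP; split.
    by move=> x [Lx|->] //; exact: LK.
  by move=> q Kq; apply: contrapT => nq; apply: H; exists q.
have [d _ qd] := sub q Kq; subst q.
case: d Kq nq => [|k|n' m'] Kq nq; [by exfalso; apply: nq; left; exists AInf|by exfalso; apply: nq; left; exists (AX k)|].
have [Pa [oPa E1]] := fopen _ (Q1_open n m).
have [Pb [oPb E2]] := fopen _ (Q1_open n' m').
exists 3%N, (U3 Pa Pb setT); split.
+ by apply: U3_open => //; exact: openT.
+ split => //; split; first by move=> x _; exists 2%N.
  case=> [|[|[|i]]] // _.
  * by exists (f (AXX n m)); split => //; exact: Q1_mem E1.
  * by exists (f (AXX n' m')); split => //; exact: Q1_mem E2.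
  * by exists (f (AXX n m)).
+ move=> y [_ [_ meet]].
  have [x1 [gx1 Px1]] := meet 0%N erefl.
  have [x2 [gx2 Px2]] := meet 1%N erefl.
  have e1 := hitQ1 _ _ _ E1 _ _ gx1 Px1.
  have e2 := hitQ1 _ _ _ E2 _ _ gx2 Px2.
  rewrite e1 in e2; case: e2 => en em; subst n' m'; apply: nq; by right.
Qed.

End Proof.

Theorem proposition3p10 (X : topologicalType) :
  hausdorff_space X -> @regular_space X ->
  (exists f : arens -> X, closed_embedding arens_open (@open X) setT f) ->
  exists g : fan -> set X,
    closed_embedding fan_open (@vietoris_open X) (@Kset X) g.
Proof.
move=> _ _ [f [finj _ fcont fopen fclosed]].
exists (g _ f); split.
- by apply: g_inj.
- by move=> K [y _ <-]; by apply: g_Kset.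
- by move=> W WO; by apply: g_cont.
- move=> U UO.
  exists [set K | exists k (Ob : nat -> set X), [/\ forall i, (i < k)%N -> open (Ob i),
     vietoris_box k Ob K & forall y', vietoris_box k Ob (g _ f y') -> U y']].
  split.
    move=> K [k [Ob [oOb bK H]]]; split; first exact: bK.1.
    by exists k, Ob; split => // K' bK'; exists k, Ob.
  apply/seteqP; split.
    move=> K [y Uy <-]; split; last by exists y.
    by apply: g_open_box.
  by move=> K [[k [Ob [_ bK H]]] [y _ gyK]]; exists y => //; apply: H; rewrite gyK.
- exists [set K | exists k (Ob : nat -> set X), [/\ forall i, (i < k)%N -> open (Ob i),
     vietoris_box k Ob K & forall y, ~ vietoris_box k Ob (g _ f y)]].
  split.
    move=> K [k [Ob [oOb bK H]]]; split; first exact: bK.1.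
    by exists k, Ob; split => // K' bK'; exists k, Ob.
  apply/seteqP; split.
    by move=> K [KK nK]; split => //; by apply: g_closed_box.
  move=> K [[k [Ob [_ bK H]]] KK]; split => // -[y _ gyK].
  by apply: (H y); rewrite gyK.
Qed.
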